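(* Let $L$ be a polyhedron and $G$ a simplicial group. Then for every $V\in\mathbb Z[G(L)]$ we have $\theta(V)\le\eta(V)$.
   Context: A polyhedron $L$ is a finite simplicial complex of affine simplices in $\mathbb R^\infty$ with a linear order on the vertices of each simplex, compatible with faces; $\hat L$ is the simplicial set obtained by adding degenerate simplices. For a simplicial set $E$, $E(L)$ is the set of simplicial maps $\hat L\to E$; for $y\in L$, $\bar{\bar y}$ is the subpolyhedron of $y$ and its faces. For $T\subset L$ put $E_T=\prod_{y\in T}E(\bar{\bar y})$ and $v\|_T=(v|_{\bar{\bar y}})_{y\in T}$, extended additively to $\mathbb Z[E(L)]\to\mathbb Z[E_T]$ (free abelian groups on these sets). For $V\in\mathbb Z[E(L)]$, $\theta(V)=\inf\{\#T: T\subset L,\ V\|_T\neq0\}\in\mathbb N\cup\{\infty\}$. For a simplicial group $G$, $G(L)$ and $G_L=\prod_{y\in L}G(\bar{\bar y})$ are groups, $\mathbb Z H$ denotes a group ring with augmentation ideal $\Delta(H)$ ($\Delta(H)^0=\mathbb ZH$), and $\eta(V)=\sup\{s\in\mathbb N: V\|_L\in\Delta(G_L)^s\}$. *)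

(* Defs.v *)
From HB Require Import structures.
From mathcomp Require Import all_boot ssralg ssrint monoid.
From mathcomp Require Import boolp.
From mathcomp.multinomials Require Import freeg.

Set Implicit Arguments.
Unset Strict Implicit.
Unset Printing Implicit Defensive.

(* The simplex category Delta: morphisms [m] -> [n] are nondecreasing  *)
(* maps 'I_m.+1 -> 'I_n.+1.                                            *)
Definition Dmor (m n : nat) :=
  {f : {ffun 'I_m.+1 -> 'I_n.+1} |
   [forall i : 'I_m.+1, forall j : 'I_m.+1, (i <= j)%N ==> (f i <= f j)%N]}.

Lemma did_mono n :
  [forall i : 'I_n.+1, forall j : 'I_n.+1, (i <= j)%N ==> ([ffun k : 'I_n.+1 => k] i <= [ffun k : 'I_n.+1 => k] j)%N].
Proof. by apply/forallP => i; apply/forallP => j; rewrite !ffunE; apply/implyP. Qed.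

Definition did (n : nat) : Dmor n n :=
  @exist {ffun 'I_n.+1 -> 'I_n.+1} _ [ffun k : 'I_n.+1 => k] (did_mono n).

Lemma dcomp_mono m n p (g : Dmor n p) (f : Dmor m n) :
  [forall i : 'I_m.+1, forall j : 'I_m.+1, (i <= j)%N ==>
     ([ffun k => val g (val f k)] i <= [ffun k => val g (val f k)] j)%N].
Proof.
apply/forallP => i; apply/forallP => j; rewrite !ffunE; apply/implyP => hij.
have /forallP /(_ i) /forallP /(_ j) /implyP hf := valP f.
have /forallP /(_ (val f i)) /forallP /(_ (val f j)) /implyP hg := valP g.
exact: hg (hf hij).
Qed.

Definition dcomp m n p (g : Dmor n p) (f : Dmor m n) : Dmor m p :=
  @exist {ffun 'I_m.+1 -> 'I_p.+1} _ [ffun k => val g (val f k)] (dcomp_mono g f).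

Record sSet := SSet {
  sob :> nat -> Type;
  sact : forall m n, Dmor m n -> sob n -> sob m;
  sact_id : forall n (x : sob n), sact (did n) x = x;
  sact_comp : forall m n p (f : Dmor m n) (g : Dmor n p) (x : sob p),
      sact (dcomp g f) x = sact f (sact g x) }.

Record sGroup := SGroup {
  sgob : nat -> groupType;
  sgact : forall m n, Dmor m n -> sgob n -> sgob m;
  sgact_id : forall n (x : sgob n), sgact (did n) x = x;
  sgact_comp : forall m n p (f : Dmor m n) (g : Dmor n p) (x : sgob p),
      sgact (dcomp g f) x = sgact f (sgact g x);
  sgact_mul : forall m n (f : Dmor m n) (x y : sgob n),
      sgact f (x * y)%g = (sgact f x * sgact f y)%g }.

Definition sGroup_sSet (G : sGroup) : sSet :=
  @SSet (fun n => (sgob G n : Type)) (@sgact G) (@sgact_id G) (@sgact_comp G).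

(* Polyhedra: finite simplicial complexes (simplices = nonempty finite *)
(* vertex sets, closed under nonempty faces) with a linear order on    *)
(* the vertices of each simplex (compatibility with faces is automatic *)
(* since the orders are restrictions of one relation [pord]).          *)
Record polyhedron (V : finType) := Polyhedron {
  psimp : {set {set V}};
  pord : rel V;
  psimp_ne : set0 \notin psimp;
  psimp_face : forall s t : {set V}, s \in psimp -> t \subset s -> t != set0 -> t \in psimp;
  pord_refl : forall s, s \in psimp -> forall u, u \in s -> pord u u;
  pord_anti : forall s, s \in psimp -> forall u v, u \in s -> v \in s ->
      pord u v -> pord v u -> u = v;
  pord_trans : forall s, s \in psimp -> forall u v w, u \in s -> v \in s -> w \in s ->
      pord u v -> pord v w -> pord u w;
  pord_total : forall s, s \in psimp -> forall u v, u \in s -> v \in s ->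
      pord u v || pord v u }.

Section Hat.
Variables (V : finType) (le : rel V).

(* n-simplices of the simplicial set  \hat K  of the ordered complex    *)
(* with simplex set S: order-preserving maps [n] -> vertices whose      *)
(* image is a simplex (degenerate ones included).                       *)
Definition hat_ok (S : {set {set V}}) n (x : {ffun 'I_n.+1 -> V}) : bool :=
  [forall i : 'I_n.+1, forall j : 'I_n.+1, (i <= j)%N ==> le (x i) (x j)] && ([set x i | i : 'I_n.+1] \in S).

Definition hatS (S : {set {set V}}) n := {x : {ffun 'I_n.+1 -> V} | hat_ok S x}.

(* E(K): simplicial maps \hat K -> E (naturality w.r.t. all simplicial *)
(* operators; the operator t^* on \hat K is precomposition with t).    *)
Record smap (S : {set {set V}}) (E : sSet) := SMap {
  smf : forall n, hatS S n -> E n;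
  smnat : forall m n (t : Dmor m n) (x : hatS S n) (x' : hatS S m),
      val x' = [ffun i => val x (val t i)] -> smf x' = sact t (smf x) }.

Lemma hat_ok_sub (S S' : {set {set V}}) n (x : {ffun 'I_n.+1 -> V}) :
  S \subset S' -> hat_ok S x -> hat_ok S' x.
Proof. by move=> hS /andP[h1 h2]; rewrite /hat_ok h1 (subsetP hS _ h2). Qed.

Definition hat_incl (S S' : {set {set V}}) (hS : S \subset S') n (x : hatS S n) :
  hatS S' n := @exist {ffun 'I_n.+1 -> V} _ (val x) (hat_ok_sub hS (valP x)).

Lemma restr_nat (S S' : {set {set V}}) (hS : S \subset S') (E : sSet) (v : smap S' E) :
  forall m n (t : Dmor m n) (x : hatS S n) (x' : hatS S m),
    val x' = [ffun i => val x (val t i)] ->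
    smf v (hat_incl hS x') = sact t (smf v (hat_incl hS x)).
Proof. by move=> m n t x x' e; apply: smnat. Qed.

Definition restr (S S' : {set {set V}}) (hS : S \subset S') (E : sSet) (v : smap S' E) :
  smap S E := SMap (restr_nat hS v).

Lemma smul_nat (S : {set {set V}}) (G : sGroup) (a b : smap S (sGroup_sSet G)) :
  forall m n (t : Dmor m n) (x : hatS S n) (x' : hatS S m),
    val x' = [ffun i => val x (val t i)] ->
    ((smf a x' : sgob G m) * smf b x')%g
    = sgact t ((smf a x : sgob G n) * smf b x)%g.
Proof. by move=> m n t x x' e; rewrite sgact_mul (smnat a e) (smnat b e). Qed.

Definition smul (S : {set {set V}}) (G : sGroup) (a b : smap S (sGroup_sSet G)) :
  smap S (sGroup_sSet G) := @SMap S (sGroup_sSet G) _ (smul_nat a b).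

End Hat.

Section Poly.
Variables (V : finType) (L : polyhedron V).

Definition bar (y : {set V}) : {set {set V}} := [set t : {set V} | (t \subset y) && (t != set0)].

Lemma bar_sub y : y \in psimp L -> bar y \subset psimp L.
Proof.
move=> hy; apply/subsetP => t; rewrite inE => /andP[hty htn].
exact: psimp_face hy hty htn.
Qed.

Definition EL (E : sSet) := smap (pord L) (psimp L) E.
Definition Ebar (E : sSet) (y : {set V}) := smap (pord L) (bar y) E.

Definition ET (E : sSet) (T : {set {set V}}) :=
  forall y : {y : {set V} | y \in T}, Ebar E (val y).

Definition restrT (E : sSet) (T : {set {set V}}) (hT : T \subset psimp L) (v : EL E) :
  ET E T := fun y => restr (bar_sub (subsetP hT _ (valP y))) v.

End Poly.

Definition FZ (X : Type) := {freeg {classic X} / int}.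

Definition pushZ (X Y : Type) (f : X -> Y) (a : FZ X) : FZ Y :=
  fglift (fun x : {classic X} => << (f x : {classic Y}) >> : FZ Y) a.

Definition gmul (H : Type) (op : H -> H -> H) (a b : FZ H) : FZ H :=
  fglift (fun x : {classic H} =>
     fglift (fun y : {classic H} => << (op x y : {classic H}) >> : FZ H) b) a.

Inductive zspan (M : zmodType) (P : M -> Prop) : M -> Prop :=
  | zspan0 : zspan P 0%R
  | zspanP x : P x -> zspan P x
  | zspanB x y : zspan P x -> zspan P y -> zspan P (x - y)%R.

(* membership in Delta(H)^s, Delta(H) the augmentation ideal (kernel of *)
(* the augmentation deg : Z[H] -> Z), Delta^0 = ZH,                     *)
(* Delta^{s+1} = Delta^s . Delta (additive span of products)            *)
Fixpoint augpow (H : Type) (op : H -> H -> H) (s : nat) : FZ H -> Prop :=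
  match s with
  | 0 => fun _ => True
  | s'.+1 => zspan (fun c : FZ H => exists a b : FZ H,
                 [/\ augpow op s' a, deg b = 0%R & c = gmul op a b])
  end.

(* N u {oo} as option nat (None = oo), with inf and sup of subsets of N *)
Lemma ex_asbool (P : nat -> Prop) : (exists n, P n) -> exists n, `[< P n >].
Proof. by case=> n hn; exists n; apply/asboolP. Qed.

Definition einf (P : nat -> Prop) : option nat :=
  match pselect (exists n, P n) with
  | left h => Some (ex_minn (ex_asbool h))
  | right _ => None
  end.

Definition esup (P : nat -> Prop) : option nat :=
  match pselect (exists m, forall s, P s -> s <= m) with
  | left h => Some (ex_minn (ex_asbool h))
  | right _ => None
  end.

Definition ele (a b : option nat) : bool :=
  match a, b with
  | _, None => true
  | None, Some _ => false
  | Some x, Some y => x <= y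
  end.

Section ThetaEta.
Variables (V : finType) (L : polyhedron V).

Definition theta_inv (E : sSet) (v : FZ (EL L E)) : option nat :=
  einf (fun k => exists (T : {set {set V}}) (hT : T \subset psimp L),
          #|T| = k /\ pushZ (restrT hT) v <> 0%R).

Definition GL (G : sGroup) := ET L (sGroup_sSet G) (psimp L).
Definition GLmul (G : sGroup) (a b : GL G) : GL G := fun y => smul (a y) (b y).

Definition eta_inv (G : sGroup) (v : FZ (EL L (sGroup_sSet G))) : option nat :=
  esup (fun s => augpow (@GLmul G) s (pushZ (restrT (subxx (psimp L))) v)).

End ThetaEta.

(* Main.v *)
Require Import Defs.
From HB Require Import structures.
From mathcomp Require Import all_boot ssralg ssrint monoid.
From mathcomp Require Import boolp.
From mathcomp.multinomials Require Import freeg.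
Set Implicit Arguments.
Unset Strict Implicit.
Unset Printing Implicit Defensive.
Import GRing.Theory.
Local Open Scope ring_scope.

HB.instance Definition _ (K : choiceType) (M : lmodType int) (f : K -> M) :=
  GRing.isAdditive.Build _ _ (fglift f) (lift_is_additive f).

Lemma fgliftE (K : choiceType) (M : lmodType int) (f : K -> M) (D : {freeg K / int}) :
  fglift f D = \sum_(z <- dom D) coeff z D *: f z.
Proof.
rewrite -{1}(freeg_sumE D) raddf_sum; apply: eq_bigr => z _; exact: liftU.
Qed.

Lemma fgliftZ (K : choiceType) (M : lmodType int) (f : K -> M) (k : int) D :
  fglift f (k *: D) = k *: fglift f D.
Proof. by rewrite -[k]intz !scaler_int raddfMz. Qed.

Definition bz (X : Type) (x : X) : FZ X := << (x : {classic X}) >>.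

Lemma fglift_bz (X : Type) (M : lmodType int) (f : {classic X} -> M) (x : X) :
  fglift f (bz x) = f x.
Proof. by rewrite /bz liftU scale1r. Qed.

Lemma fgliftB_fun (K : choiceType) (M : lmodType int) (f g : K -> M) D :
  fglift (fun x => f x - g x) D = fglift f D - fglift g D.
Proof.
rewrite !fgliftE -sumrB; apply: eq_bigr => z _; exact: scalerBr.
Qed.

Lemma fglift_sum_fun (K : choiceType) (M : lmodType int) (J : Type) (r : seq J)
  (F : J -> K -> M) D :
  fglift (fun x => \sum_(j <- r) F j x) D = \sum_(j <- r) fglift (F j) D.
Proof.
rewrite fgliftE; under eq_bigr do rewrite scaler_sumr.
rewrite exchange_big; apply: eq_bigr => j _; by rewrite fgliftE.
Qed.

Lemma fglift_ext (K : choiceType) (M : lmodType int) (f g : K -> M) D :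
  (forall x, f x = g x) -> fglift f D = fglift g D.
Proof. by move=> h; rewrite !fgliftE; apply: eq_bigr => z _; rewrite h. Qed.

Lemma fglift_push (X Y : Type) (M : lmodType int) (F : {classic Y} -> M) (e : X -> Y) D :
  fglift F (pushZ e D) = fglift (fun x : {classic X} => F (e x)) D.
Proof.
rewrite /pushZ [in LHS](fgliftE _ D) raddf_sum fgliftE; apply: eq_bigr => z _.
by rewrite -[coeff z D]intz !scaler_int raddfMz /= liftU scale1r.
Qed.

Lemma fglift_bz_id (X : Type) (D : FZ X) : fglift (fun x : {classic X} => bz x) D = D.
Proof.
rewrite fgliftE -[RHS]freeg_sumE; apply: eq_bigr => z _.
by rewrite /bz -[coeff _ _]intz scaler_int freegU_mulz.
Qed.

Lemma gmulU (H : Type) (op : H -> H -> H) (x y : H) : gmul op (bz x) (bz y) = bz (op x y).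
Proof. by rewrite /gmul fglift_bz fglift_bz. Qed.

Lemma gmulBl (H : Type) (op : H -> H -> H) a b c : gmul op (a - b) c = gmul op a c - gmul op b c.
Proof. by rewrite /gmul raddfB. Qed.

Lemma gmulBr (H : Type) (op : H -> H -> H) a b c : gmul op a (b - c) = gmul op a b - gmul op a c.
Proof. by rewrite /gmul -fgliftB_fun; apply: fglift_ext => x; rewrite raddfB. Qed.
Fixpoint subs (T : Type) (ys : seq T) : seq (seq T) :=
  match ys with
  | [::] => [:: [::]]
  | y :: ys' => subs ys' ++ map (cons y) (subs ys')
  end.

Section Aug.
Variables (H : Type) (op : H -> H -> H).

Lemma Ak0 s : augpow op s 0.
Proof. by case: s => //= s; exact: zspan0. Qed.

Lemma AkB s a b : augpow op s a -> augpow op s b -> augpow op s (a - b).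
Proof. by case: s => //= s; exact: zspanB. Qed.

Lemma AkD s a b : augpow op s a -> augpow op s b -> augpow op s (a + b).
Proof.
move=> ha hb; have := AkB ha (AkB (Ak0 s) hb); by rewrite sub0r opprK.
Qed.

Lemma AkMn s a n : augpow op s a -> augpow op s (a *+ n).
Proof.
move=> ha; elim: n => [|n IH]; first by rewrite mulr0n; exact: Ak0.
by rewrite mulrS; exact: AkD.
Qed.

Lemma AkZ s (c : int) a : augpow op s a -> augpow op s (c *: a).
Proof.
move=> ha; rewrite -[c]intz scaler_int.
case: c => n; first exact: AkMn.
by rewrite NegzE mulrNz -sub0r; apply: AkB; [exact: Ak0|exact: AkMn].
Qed.

Lemma Ak_fglift s (K : choiceType) (F : K -> FZ H) D :
  (forall x, augpow op s (F x)) -> augpow op s (fglift F D).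
Proof.
move=> hF; rewrite fgliftE; apply: big_ind; [exact: Ak0|exact: AkD|].
move=> z _; exact: AkZ.
Qed.
End Aug.

Lemma subs_sub (T : eqType) (ys zs : seq T) : zs \in subs ys -> {subset zs <= ys}.
Proof.
elim: ys zs => [|y ys IH] zs /=; first by rewrite inE => /eqP -> .
rewrite mem_cat => /orP[/IH h z hz|/mapP[zs' /IH h ->] z]; rewrite inE.
  by rewrite h ?orbT.
by rewrite inE => /orP[->//|/h ->]; rewrite orbT.
Qed.

Lemma pushZ_comp (X Y Z : Type) (f : Y -> Z) (g : X -> Y) D :
  pushZ f (pushZ g D) = pushZ (fun x => f (g x)) D.
Proof. exact: (fglift_push (fun y => bz (f y)) g D). Qed.

Lemma pushZ_ext (X Y : Type) (f g : X -> Y) D :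
  (forall x, f x = g x) -> pushZ f D = pushZ g D.
Proof. by move=> h; rewrite /pushZ; apply: fglift_ext => x; rewrite h. Qed.

Lemma pushZ0 (X Y : Type) (f : X -> Y) : pushZ f 0 = 0.
Proof. by rewrite /pushZ raddf0. Qed.

Section Main.
Variables (V : finType) (L : polyhedron V) (G : sGroup).
Local Notation E := (sGroup_sSet G).

Lemma sgact1 m n (t : Dmor m n) : sgact t (1 : sgob G n)%g = 1%g.
Proof.
have h := @sgact_mul G _ _ t 1%g 1%g; rewrite mulg1 in h.
by apply: (@mulgI _ (sgact t 1%g)); rewrite -h mulg1.
Qed.

Definition gone (S : {set {set V}}) : smap (pord L) S E :=
  @SMap _ _ S E (fun n _ => 1%g) (fun m n t x x' _ => esym (sgact1 t)).

Lemma smap_eq S (a b : smap (pord L) S E) :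
  (forall n (x : hatS (pord L) S n), smf a x = smf b x) -> a = b.
Proof.
case: a => fa na; case: b => fb nb /= h.
have efg : fa = fb.
  apply: functional_extensionality_dep => n; apply: functional_extensionality_dep => x; exact: h.
subst fb; congr SMap; exact: Prop_irrelevance.
Qed.

Definition one : GL L G := fun y => gone (bar (val y)).
Local Notation GLm := (@GLmul V L G).

Definition eT (T : {set {set V}}) (g : GL L G) : GL L G :=
  fun y => if val y \in T then g y else one y.

Lemma GLmul1 h : GLm h one = h.
Proof.
apply: functional_extensionality_dep => y; apply: smap_eq => n x /=; exact: mulg1.
Qed.

Lemma GL1mul h : GLm one h = h.
Proof.
apply: functional_extensionality_dep => y; apply: smap_eq => n x /=; exact: mul1g.
Qed.

Lemma GLmulA a b c : GLm (GLm a b) c = GLm a (GLm b c).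
Proof.
apply: functional_extensionality_dep => y; apply: smap_eq => n x /=; exact: esym (mulgA _ _ _).
Qed.

Lemma eT_cons g y ys : y \notin ys ->
  GLm (eT [set y] g) (eT [set z in ys] g) = eT [set z in y :: ys] g.
Proof.
move=> hy; apply: functional_extensionality_dep => c; rewrite /eT /GLmul !inE.
have [e|ne] := eqVneq (val c) y; rewrite /=.
  have -> : (val c \in ys) = false by rewrite e; exact: negbTE.
  by apply: smap_eq => n x /=; exact: mulg1.
by case: (val c \in ys); apply: smap_eq => n x /=; exact: mul1g.
Qed.

Lemma eT_all g : eT [set z in enum (psimp L)] g = g.
Proof.
apply: functional_extensionality_dep => c; by rewrite /eT inE mem_enum (valP c).
Qed.

Lemma eT_nil g : eT [set z in [::]] g = one.
Proof.
by apply: functional_extensionality_dep => c; rewrite /eT inE.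
Qed.

Lemma eT_sub1 (T : {set {set V}}) y g : y \in T -> eT [set y] (eT T g) = eT [set y] g.
Proof.
move=> hy; apply: functional_extensionality_dep => c; rewrite /eT inE.
have [e|//] := eqVneq (val c) y; rewrite /=.
by have -> : (val c \in T) = true by rewrite e.
Qed.


Definition dd y g : FZ (GL L G) := bz (eT [set y] g) - bz one.
Definition Fst g (acc : FZ (GL L G)) (y : {set V}) := gmul GLm acc (dd y g).
Definition Dl (zs : seq {set V}) g := foldl (Fst g) (bz one) zs.

Lemma foldlB g zs : forall a b,
  foldl (Fst g) (a - b) zs = foldl (Fst g) a zs - foldl (Fst g) b zs.
Proof.
elim: zs => [//|z zs IH] a b /=.
by rewrite /Fst gmulBl IH.
Qed.

Lemma Sexp g ys : uniq ys -> forall h,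
  \sum_(zs <- subs ys) foldl (Fst g) (bz h) zs = bz (GLm h (eT [set z in ys] g)).
Proof.
elim: ys => [|y ys IH] /=.
  by move=> _ h; rewrite big_seq1 /= eT_nil GLmul1.
case/andP=> hy hu h; rewrite big_cat big_map /=.
have -> : Fst g (bz h) y = bz (GLm h (eT [set y] g)) - bz h.
  by rewrite /Fst /dd gmulBr !gmulU GLmul1.
rewrite [X in _ + X](eq_bigr _ (fun zs _ => foldlB g zs _ _)).
rewrite sumrB !IH // addrC subrK GLmulA eT_cons //.
Qed.


Lemma deg_dd y g : deg (dd y g) = 0.
Proof. by rewrite /dd /bz degB !degU subrr. Qed.

Lemma foldl_aug g zs : forall acc j, (forall i, (i <= j)%N -> augpow GLm i acc) ->
  forall i, (i <= j + size zs)%N -> augpow GLm i (foldl (Fst g) acc zs).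
Proof.
elim: zs => [|z zs IH] acc j hacc i hi /=; first by apply: hacc; rewrite addn0 in hi.
apply: (IH _ j.+1) => [[|i'] hi'|]; last by rewrite addSnnS.
  by [].
apply: zspanP; exists acc, (dd z g); split => //; last exact: deg_dd.
exact: hacc.
Qed.

Lemma Dl_read (T : {set {set V}}) g zs : {subset zs <= T} -> forall acc,
  foldl (Fst (eT T g)) acc zs = foldl (Fst g) acc zs.
Proof.
elim: zs => [//|z zs IH] hz acc /=.
rewrite IH; last by move=> y hy; apply: hz; rewrite inE hy orbT.
by rewrite /Fst /dd eT_sub1 // hz // inE eqxx.
Qed.

Definition emb_at (T : {set {set V}}) (h : ET L E T) (y : {y : {set V} | y \in psimp L})
  (b : bool) (e : (val y \in T) = b) : Ebar L E (val y) :=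
  (if b return ((val y \in T) = b -> Ebar L E (val y))
   then fun H => h (exist (fun y => y \in T) (val y) H) else fun _ => one y) e.

Definition emb T (h : ET L E T) : GL L G := fun y => emb_at h (erefl (val y \in T)).

Lemma eT_restr (T : {set {set V}}) (hT : T \subset psimp L) (u : EL L E) :
  eT T (restrT (subxx (psimp L)) u) = emb (restrT hT u).
Proof.
apply: functional_extensionality_dep => y; rewrite /emb.
suff : forall b (e : (val y \in T) = b),
   eT T (restrT (subxx (psimp L)) u) y = emb_at (restrT hT u) e by apply.
case=> e; rewrite /eT /emb_at e //=.
rewrite /restrT /=; set p1 := bar_sub _; set p2 := bar_sub _; by rewrite (bool_irrelevance p1 p2).
Qed.

Lemma pushA (T : {set {set V}}) (hT : T \subset psimp L) (v : FZ (EL L E)) :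
  pushZ (restrT hT) v = 0 ->
  pushZ (eT T) (pushZ (restrT (subxx (psimp L))) v) = 0.
Proof.
move=> h0; rewrite pushZ_comp (pushZ_ext _ (eT_restr hT)) -pushZ_comp h0.
exact: pushZ0.
Qed.


Lemma core (v : FZ (EL L E)) k :
  (forall (T : {set {set V}}) (hT : T \subset psimp L), (#|T| < k)%N ->
     pushZ (restrT hT) v = 0) ->
  augpow GLm k (pushZ (restrT (subxx (psimp L))) v).
Proof.
move=> hv; set x := pushZ _ v.
set ys := enum (psimp L).
have ex : x = \sum_(zs <- subs ys) fglift (fun g : {classic GL L G} => Dl zs g) x.
  rewrite -fglift_sum_fun -{1}(fglift_bz_id x); apply: fglift_ext => g.
  by rewrite /Dl Sexp ?enum_uniq // eT_all GL1mul.
rewrite ex big_seq; apply: big_ind; [exact: Ak0|exact: AkD|] => zs hzs.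
have [hk|hk] := leqP k (size zs).
  apply: Ak_fglift => g; apply: (@foldl_aug g zs (bz one) 0) => //.
  by case.
set T := [set z in zs].
have hsub : {subset zs <= T} by move=> z; rewrite inE.
have hT : T \subset psimp L.
  by apply/subsetP => z; rewrite inE => /(subs_sub hzs); rewrite mem_enum.
have hc : (#|T| < k)%N.
  by apply: leq_ltn_trans hk; rewrite cardsE; exact: card_size.
have -> : fglift (fun g : {classic GL L G} => Dl zs g) x = fglift (fun g : {classic GL L G} => Dl zs g) (pushZ (eT T) x).
  by rewrite fglift_push; apply: fglift_ext => g; rewrite /Dl Dl_read.
rewrite (pushA (hv T hT hc)) raddf0; exact: Ak0.
Qed.

End Main.

Theorem mainTheorem6 (V : finType) (L : polyhedron V) (G : sGroup)
  (v : FZ (EL L (sGroup_sSet G))) :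
  ele (theta_inv v) (eta_inv v).
Proof.
rewrite /theta_inv /eta_inv /einf /esup.
case: pselect => [hex|hnex]; case: pselect => [hub|hnub] //=.
  case: (ex_minnP (ex_asbool hex)) => k /asboolP [T [hT [hcard hne]]] hmin.
  case: (ex_minnP (ex_asbool hub)) => m /asboolP hm _.
  apply: hm; apply: core => T' hT' hlt.
  case: (eqVneq (pushZ (restrT hT') v) 0) => // hne'.
  have : (k <= #|T'|)%N.
    by apply: hmin; apply/asboolP; exists T', hT'; split => //; exact/eqP.
  by rewrite leqNgt hlt.
case: hub => m hm.
have : (m.+1 <= m)%N; last by rewrite ltnn.
apply: hm; apply: core => T hT _.
case: (eqVneq (pushZ (restrT hT) v) 0) => // hne.
by exfalso; apply: hnex; exists #|T|, T, hT; split => //; exact/eqP.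
Qed.
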